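(* Let $\mathcal{G}=(\mathbf{V},\mathbf{E})$ be the directed mixed graph (DMG) of a simple structural causal model (SCM) whose distribution is $\sigma$-faithful to $\mathcal{G}$. Let $\mathbf{S}\subseteq\mathbf{V}$ be the set of selection bias variables, and let $V,W,X,Y\in\mathbf{V}\setminus\mathbf{S}$ be four distinct variables. Suppose that $$V \perp\!\!\!\perp Y \mid \mathbf{S}\cup[\{X\}] \qquad\text{and}\qquad V \not\perp\!\!\!\perp W \mid \mathbf{S}\cup[\{X\}],$$ i.e. (i) $V \perp\!\!\!\perp Y \mid \{X\}\cup\mathbf{S}$ and $V\not\perp\!\!\!\perp Y\mid \mathbf{S}$, and (ii) $V\not\perp\!\!\!\perp W\mid\{X\}\cup\mathbf{S}$ and $V\perp\!\!\!\perp W\mid\mathbf{S}$. Then $X\in\mathrm{an}(Y)$, $Y\notin\mathrm{an}(X)$, $X\notin\mathrm{an}(\mathbf{S})$, and $X$ and $Y$ are unconfounded (there is no bidirected edge $X\leftrightarrow Y$ in $\mathcal{G}$).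
   Context: A directed mixed graph (DMG) $\mathcal{G}=(\mathbf{V},\mathbf{E})$ has nodes $\mathbf{V}$ (random variables) and edges that are directed ($\to$) or bidirected ($\leftrightarrow$) between distinct nodes; cycles are allowed. Directed edges represent direct causal relations, bidirected edges represent latent confounding. $X$ is an ancestor of $Y$ ($X\in\mathrm{an}(Y)$) if there is a directed path from $X$ to $Y$ (every node is its own ancestor); for a set, $\mathrm{an}(\mathbf{X})=\bigcup_{X\in\mathbf{X}}\mathrm{an}(X)$. The strongly connected component of $X$ is $\mathrm{an}(X)\cap\mathrm{de}(X)$. A collider on a walk is a node $X$ with both adjacent edge marks being arrowheads into $X$. A walk between $X$ and $Y$ is $\sigma$-blocked by $\mathbf{C}\subseteq\mathbf{V}$ if $X$ or $Y$ is in $\mathbf{C}$, or the walk contains a collider not in $\mathrm{an}(\mathbf{C})$, or it contains a non-collider in $\mathbf{C}$ that points (with a directed edge) to an adjacent node on the walk lying in a different strongly connected component; $X$ and $Y$ are $\sigma$-separated by $\mathbf{C}$ if every walk between them is $\sigma$-blocked. A simple SCM is one whose DMG satisfies the $\sigma$-separation Markov property (σ-separation implies conditional independence); $\sigma$-faithfulness means conversely that every conditional independence in the distribution corresponds to a $\sigma$-separation, so conditional independences coincide exactly with $\sigma$-separations. Selection bias variables $\mathbf{S}$ are unobserved variables of the model on which the data are implicitly conditioned (samples are included depending on $\mathbf{S}$). Notation for disjoint sets $\{X\},\{Y\},\mathbf{W},\mathbf{Z}$: the minimal conditional independence $X\perp\!\!\!\perp Y\mid \mathbf{W}\cup[\mathbf{Z}]$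 means $X\perp\!\!\!\perp Y\mid\mathbf{W}\cup\mathbf{Z}$ and $X\not\perp\!\!\!\perp Y\mid\mathbf{W}\cup\mathbf{Z}'$ for every proper subset $\mathbf{Z}'\subsetneq\mathbf{Z}$; the minimal conditional dependence $X\not\perp\!\!\!\perp Y\mid\mathbf{W}\cup[\mathbf{Z}]$ means $X\not\perp\!\!\!\perp Y\mid\mathbf{W}\cup\mathbf{Z}$ and $X\perp\!\!\!\perp Y\mid\mathbf{W}\cup\mathbf{Z}'$ for every $\mathbf{Z}'\subsetneq\mathbf{Z}$. *)

(* Defs.v *)
From mathcomp Require Import all_boot.
Set Implicit Arguments. Unset Strict Implicit. Unset Printing Implicit Defensive.

(* A directed mixed graph on a finite node set V:
   [dir x y] means x -> y, [bid x y] means x <-> y. Edges are between distinct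
   nodes; bidirected edges are symmetric; directed cycles are allowed. *)
Record DMG (V : finType) := {
  dir : rel V;
  bid : rel V;
  dir_irrefl : irreflexive dir;
  bid_irrefl : irreflexive bid;
  bid_sym : symmetric bid
}.

Section DMGDefs.
Variables (V : finType) (G : DMG V).

Definition anc (y : V) : {set V} := [set x | connect (dir G) x y].
Definition ancS (C : {set V}) : {set V} :=
  [set x | [exists c in C, connect (dir G) x c]].
Definition same_scc (x y : V) : bool := connect (dir G) x y && connect (dir G) y x.

(* A step of a walk from the current node u to the next node w, together with
   the edge used: Fwd = u -> w, Bwd = u <- w, Bid = u <-> w. *)
Inductive mark := Fwd | Bwd | Bid.

Definition edge_ok (u : V) (k : mark) (w : V) : bool :=
  match k with Fwd => dir G u w | Bwd => dir G w u | Bid => bid G u w end.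

Fixpoint walk_ok (u : V) (s : seq (mark * V)) : bool :=
  if s is (k, w) :: s' then edge_ok u k w && walk_ok w s' else true.

Definition wnode (x : V) (s : seq (mark * V)) (i : nat) : V :=
  nth x (x :: map snd s) i.
Definition wkind (s : seq (mark * V)) (i : nat) : mark := nth Fwd (map fst s) i.
Definition wend (x : V) (s : seq (mark * V)) : V := last x (map snd s).

Definition head_at_end (k : mark) : bool := if k is Bwd then false else true.
Definition head_at_start (k : mark) : bool := if k is Fwd then false else true.

Definition collider (s : seq (mark * V)) (i : nat) : bool :=
  head_at_end (wkind s i.-1) && head_at_start (wkind s i).

(* the internal node i has a directed edge, used by the walk, pointing to an
   adjacent node of the walk lying in a different strongly connected component *)
Definition points_out (x : V) (s : seq (mark * V)) (i : nat) : bool :=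
  ((if wkind s i.-1 is Bwd then true else false)
     && ~~ same_scc (wnode x s i) (wnode x s i.-1))
  || ((if wkind s i is Fwd then true else false)
     && ~~ same_scc (wnode x s i) (wnode x s i.+1)).

Definition sigma_blocked (C : {set V}) (x : V) (s : seq (mark * V)) : Prop :=
  x \in C \/ wend x s \in C \/
  exists i, 0 < i < size s /\
    ((collider s i /\ wnode x s i \notin ancS C) \/
     (~~ collider s i /\ wnode x s i \in C /\ points_out x s i)).

Definition sigma_sep (x y : V) (C : {set V}) : Prop :=
  forall s, walk_ok x s -> wend x s = y -> sigma_blocked C x s.

(* The conditional independence model of a distribution is abstracted as a
   relation CI x y C ("x is independent of y given C").  Markov property +
   sigma-faithfulness: the conditional independences coincide with the
   sigma-separations (for distinct x, y outside C). *)
Definition sigma_markov_faithful (CI : V -> V -> {set V} -> Prop) : Prop :=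
  forall x y (C : {set V}), x != y -> x \notin C -> y \notin C ->
    (CI x y C <-> sigma_sep x y C).

Definition min_indep (CI : V -> V -> {set V} -> Prop) (x y : V) (W Z : {set V}) : Prop :=
  CI x y (W :|: Z) /\ (forall Z' : {set V}, Z' \proper Z -> ~ CI x y (W :|: Z')).
Definition min_dep (CI : V -> V -> {set V} -> Prop) (x y : V) (W Z : {set V}) : Prop :=
  ~ CI x y (W :|: Z) /\ (forall Z' : {set V}, Z' \proper Z -> CI x y (W :|: Z')).

End DMGDefs.

(* Main.v *)
Require Import Defs.
From mathcomp Require Import all_boot.
From Stdlib Require Import Classical Lia.
From mathcomp Require Import zify.
Set Implicit Arguments. Unset Strict Implicit. Unset Printing Implicit Defensive.

Lemma wnode_cat (V : finType) (u : V) s r j :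
  j <= size s -> wnode u (s ++ r) j = wnode u s j.
Proof.
move=> Hj; rewrite /wnode map_cat -cat_cons nth_cat /= ltnS size_map Hj //.
Qed.

Lemma wend_wnode (V : finType) (u : V) s : wend u s = wnode u s (size s).
Proof. by rewrite /wend /wnode (last_nth u) size_map. Qed.

Lemma wend_cat (V : finType) (u : V) s r : wend u (s ++ r) = wend (wend u s) r.
Proof. by rewrite /wend map_cat last_cat. Qed.

Lemma wnode_cat2 (V : finType) (u : V) s r j :
  j <= size r -> wnode u (s ++ r) (size s + j) = wnode (wend u s) r j.
Proof.
move=> Hj; rewrite /wnode /wend map_cat -cat_cons lastI cat_rcons nth_cat size_belast size_map.
rewrite ltnNge leq_addr /= addKn; apply: set_nth_default; by rewrite /= size_map ltnS.
Qed.

Lemma wkind_cat (V : finType) (s r : seq (mark * V)) j :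
  j < size s -> wkind (s ++ r) j = wkind s j.
Proof. by move=> Hj; rewrite /wkind map_cat nth_cat size_map Hj. Qed.

Lemma wkind_cat2 (V : finType) (s r : seq (mark * V)) j :
  wkind (s ++ r) (size s + j) = wkind r j.
Proof. by rewrite /wkind map_cat nth_cat size_map ltnNge leq_addr /= addKn. Qed.

Lemma size_take_le (T : Type) (s : seq T) k : k <= size s -> size (take k s) = k.
Proof. exact: size_takel. Qed.

Lemma wnode_take (V : finType) (u : V) s k j :
  k <= size s -> j <= k -> wnode u (take k s) j = wnode u s j.
Proof.
move=> Hk Hj; rewrite -{2}(cat_take_drop k s) wnode_cat // size_take_le //.
Qed.

Lemma wkind_take (V : finType) (s : seq (mark * V)) k j :
  k <= size s -> j < k -> wkind (take k s) j = wkind s j.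
Proof.
move=> Hk Hj; rewrite -{2}(cat_take_drop k s) wkind_cat // size_take_le //.
Qed.

Lemma wend_take (V : finType) (u : V) s k :
  k <= size s -> wend u (take k s) = wnode u s k.
Proof. by move=> Hk; rewrite wend_wnode wnode_take // size_take_le. Qed.

Lemma wnode_drop (V : finType) (u : V) s k j :
  k <= size s -> j <= size s - k -> wnode (wnode u s k) (drop k s) j = wnode u s (k + j).
Proof.
move=> Hk Hj; have := @wnode_cat2 V u (take k s) (drop k s) j.
by rewrite cat_take_drop size_take_le // wend_take // size_drop => ->.
Qed.

Lemma wkind_drop (V : finType) (s : seq (mark * V)) k j :
  k <= size s -> wkind (drop k s) j = wkind s (k + j).
Proof.
move=> Hk; have := @wkind_cat2 V (take k s) (drop k s) j.
by rewrite cat_take_drop size_take_le // => ->.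
Qed.

Lemma walk_ok_cat (V : finType) (G : DMG V) u s r :
  walk_ok G u (s ++ r) = walk_ok G u s && walk_ok G (wend u s) r.
Proof.
elim: s u => [|[k w] s IH] u //=.
by rewrite IH andbA.
Qed.

Lemma walk_okP (V : finType) (G : DMG V) u s :
  walk_ok G u s -> forall i, i < size s ->
  edge_ok G (wnode u s i) (wkind s i) (wnode u s i.+1).
Proof.
elim: s u => [|[k w] s IH] u //= /andP[He Hw] [|i] Hi //.
have := IH w Hw i Hi.
rewrite /wnode /wkind /=.
rewrite (set_nth_default w u); last by rewrite /= size_map ltnW.
by rewrite (set_nth_default w u (n:=i)) // size_map.
Qed.

Definition opn (V : finType) (G : DMG V) (C : {set V}) (u : V) s :=
  u \notin C /\ wend u s \notin C /\
  forall i, 0 < i < size s ->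
    (collider s i -> wnode u s i \in ancS G C) /\
    (~~ collider s i -> wnode u s i \in C -> ~~ points_out G u s i).

Lemma opn_nb (V : finType) (G : DMG V) (C : {set V}) (u : V) s :
  opn G C u s -> ~ sigma_blocked G C u s.
Proof.
move=> [Hu [He Hi]] [H|[H|[i [Hi' [[H1 H2]|[H1 [H2 H3]]]]]]].
- by rewrite H in Hu.
- by rewrite H in He.
- by have [/(_ H1) H _] := Hi i Hi'; rewrite H in H2.
- by have [_ /(_ H1 H2) H] := Hi i Hi'; rewrite H3 in H.
Qed.

Lemma nb_opn (V : finType) (G : DMG V) (C : {set V}) (u : V) s :
  ~ sigma_blocked G C u s -> opn G C u s.
Proof.
move=> Hb; split; [|split].
- by apply/negP => H; apply: Hb; left.
- by apply/negP => H; apply: Hb; right; left.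
move=> i Hi; split.
- move=> Hc; apply/negPn/negP => Hn; apply: Hb; right; right; exists i; split => //; left; by split.
- move=> Hc HC; apply/negP => Hp; apply: Hb; right; right; exists i; split => //; right; by split.
Qed.

Lemma in_ancS (V : finType) (G : DMG V) (C : {set V}) z :
  reflect (exists2 c, c \in C & connect (dir G) z c) (z \in ancS G C).
Proof.
rewrite /ancS inE; apply: (iffP existsP) => [[c /andP[H1 H2]]|[c H1 H2]]; exists c => //.
by rewrite H1.
Qed.

Lemma ancS_conn (V : finType) (G : DMG V) (C : {set V}) a b :
  connect (dir G) a b -> b \in ancS G C -> a \in ancS G C.
Proof.
move=> Hab /in_ancS[c Hc Hbc]; apply/in_ancS; exists c => //; exact: connect_trans Hbc.
Qed.

Lemma ancS_self (V : finType) (G : DMG V) (C : {set V}) z : z \in C -> z \in ancS G C.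
Proof. by move=> Hz; apply/in_ancS; exists z. Qed.

Lemma ancS_mono (V : finType) (G : DMG V) (C D : {set V}) z :
  C \subset D -> z \in ancS G C -> z \in ancS G D.
Proof.
by move=> /subsetP HCD /in_ancS[c Hc Hzc]; apply/in_ancS; exists c => //; apply: HCD.
Qed.

Lemma ancS_U1 (V : finType) (G : DMG V) (S : {set V}) x z :
  z \in ancS G (S :|: [set x]) -> z \notin ancS G S -> connect (dir G) z x.
Proof.
move=> /in_ancS[c]; rewrite in_setU in_set1 => /orP[Hc|/eqP->] // Hzc Hn.
by case/negP: Hn; apply/in_ancS; exists c.
Qed.

Lemma chase_fwd (V : finType) (G : DMG V) (S : {set V}) (u : V) s :
  walk_ok G u s ->
  (forall i, 0 < i < size s -> collider s i -> wnode u s i \in ancS G S) ->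
  forall i, i < size s -> wkind s i = Fwd ->
  connect (dir G) (wnode u s i) (wend u s) \/ wnode u s i \in ancS G S.
Proof.
move=> Hw Hc.
have H: forall n i, i + n.+1 = size s -> wkind s i = Fwd ->
  connect (dir G) (wnode u s i) (wend u s) \/ wnode u s i \in ancS G S.
  elim=> [|n IH] i Hin Hk.
  - have E : dir G (wnode u s i) (wnode u s i.+1).
      by move: (walk_okP Hw (i:=i)); rewrite Hk; apply; lia.
    left; rewrite wend_wnode -Hin addn1; exact: connect1.
  - have E : dir G (wnode u s i) (wnode u s i.+1).
      by move: (walk_okP Hw (i:=i)); rewrite Hk; apply; lia.
    case Hk1: (wkind s i.+1).
    + have HH : i.+1 + n.+1 = size s by lia.
      have [H|H] := IH i.+1 HH Hk1.
      * left; apply: connect_trans H; exact: connect1.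
      * right; apply: ancS_conn H; exact: connect1.
    + right; apply: ancS_conn (connect1 E) _; apply: Hc.
      * by rewrite -Hin; apply/andP; split => //; lia.
      * by rewrite /collider /= Hk Hk1.
    + right; apply: ancS_conn (connect1 E) _; apply: Hc.
      * by rewrite -Hin; apply/andP; split => //; lia.
      * by rewrite /collider /= Hk Hk1.
move=> i Hi; apply: (H (size s - i).-1); lia.
Qed.

Lemma chase_bwd (V : finType) (G : DMG V) (S : {set V}) (u : V) s :
  walk_ok G u s ->
  (forall i, 0 < i < size s -> collider s i -> wnode u s i \in ancS G S) ->
  forall i, 0 < i <= size s -> wkind s i.-1 = Bwd ->
  connect (dir G) (wnode u s i) u \/ wnode u s i \in ancS G S.
Proof.
move=> Hw Hc; elim=> [|i IH] // /andP[_ Hi] Hk.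
rewrite /= in Hk.
have E : dir G (wnode u s i.+1) (wnode u s i).
  by move: (walk_okP Hw (i:=i)); rewrite Hk; apply; lia.
case: i IH Hi Hk E => [|i] IH Hi Hk E.
- by left; apply: connect1.
case Hk1: (wkind s i).
- right; apply: ancS_conn (connect1 E) _; apply: Hc.
  + by apply/andP; split => //; lia.
  + by rewrite /collider /= Hk Hk1.
- have HH : 0 < i.+1 <= size s by apply/andP; split => //; lia.
  have [H|H] := IH HH Hk1.
  + left; apply: connect_trans H; exact: connect1.
  + right; apply: ancS_conn H; exact: connect1.
- right; apply: ancS_conn (connect1 E) _; apply: Hc.
  + by apply/andP; split => //; lia.
  + by rewrite /collider /= Hk Hk1.
Qed.

Lemma ctx_eq (V : finType) (G : DMG V) (u u' : V) s s' i i' :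
  wkind s i.-1 = wkind s' i'.-1 -> wkind s i = wkind s' i' ->
  wnode u s i.-1 = wnode u' s' i'.-1 -> wnode u s i = wnode u' s' i' ->
  wnode u s i.+1 = wnode u' s' i'.+1 ->
  collider s i = collider s' i' /\ points_out G u s i = points_out G u' s' i'.
Proof. by move=> H1 H2 H3 H4 H5; rewrite /collider /points_out H1 H2 H3 H4 H5. Qed.

Lemma wkind_const (V : finType) (k : mark) (l : seq V) j :
  j < size l -> wkind [seq (k, z) | z <- l] j = k.
Proof. rewrite /wkind; elim: l j => [|a l IH] [|j] //= Hj; exact: IH. Qed.

Lemma map_snd_const (V : finType) (k : mark) (l : seq V) :
  map snd [seq (k, z) | z <- l] = l.
Proof. by elim: l => //= a l ->. Qed.

Lemma wnode_const (V : finType) (k : mark) (u : V) l j :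
  wnode u [seq (k, z) | z <- l] j = nth u (u :: l) j.
Proof. by rewrite /wnode map_snd_const. Qed.

Lemma wend_const (V : finType) (k : mark) (u : V) l :
  wend u [seq (k, z) | z <- l] = last u l.
Proof. by rewrite /wend map_snd_const. Qed.

Lemma walk_fwd (V : finType) (G : DMG V) c p :
  walk_ok G c [seq (Fwd, z) | z <- p] = path (dir G) c p.
Proof. by elim: p c => //= a p IH c; rewrite IH. Qed.

Lemma path_last_conn (V : finType) (e : rel V) c p z :
  path e c p -> z \in c :: p -> connect e z (last c p).
Proof.
elim: p c => [|a p IH] c /=.
- by move=> _; rewrite inE => /eqP->.
- move=> /andP[Hca Hp]; rewrite inE => /orP[/eqP->|Hz].
  + apply: (path_connect (p:=a::p)); first by rewrite /= Hca.
    exact: (mem_last c (a :: p)).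
  + exact: IH.
Qed.

Lemma walk_rev (V : finType) (G : DMG V) c p :
  path (dir G) c p ->
  walk_ok G (last c p) [seq (Bwd, z) | z <- rev (belast c p)] /\
  wend (last c p) [seq (Bwd, z) | z <- rev (belast c p)] = c.
Proof.
elim: p c => [|a p IH] c /=; first by [].
move=> /andP[Hca Hp]; have [IH1 IH2] := IH a Hp.
rewrite rev_cons map_rcons -cats1 walk_ok_cat wend_cat IH1 IH2 /=.
by rewrite Hca.
Qed.

Lemma get_c (V : finType) (G : DMG V) (S : {set V}) x (v : V) s2 :
  opn G (S :|: [set x]) v s2 -> sigma_blocked G S v s2 -> v \notin S ->
  wend v s2 \notin S ->
  exists k, [/\ 0 < k < size s2, collider s2 k, wnode v s2 k \notin ancS G S &
    forall j, k < j < size s2 -> collider s2 j -> wnode v s2 j \in ancS G S].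
Proof.
move=> [_ [_ Ho]] Hb hv hw.
pose P := fun i => [&& 0 < i < size s2, collider s2 i & wnode v s2 i \notin ancS G S].
have Hex : exists i, P i.
  case: Hb => [H|[H|[i [Hi [[H1 H2]|[H1 [H2 H3]]]]]]].
  - by rewrite H in hv.
  - by rewrite H in hw.
  - by exists i; rewrite /P Hi H1 H2.
  - have [_ H] := Ho i Hi.
    by move: (H H1); rewrite in_setU H2 H3 => /(_ isT).
have Hub : forall i, P i -> i <= size s2.
  by move=> i /and3P[/andP[_ H] _ _]; apply: ltnW.
case: (ex_maxnP Hex Hub) => k /and3P[Hk Hc Hn] Hmax.
exists k; split => // j Hj Hcj; apply/negPn/negP => Hnj.
have := Hmax j; rewrite /P Hcj Hnj andbT.
case/andP: Hj => Hkj Hj.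
have -> : 0 < j < size s2 by apply/andP; split => //; lia.
move=> /(_ isT); lia.
Qed.

Lemma walkB (V : finType) (G : DMG V) (S : {set V}) x (v w : V) s2 k :
  walk_ok G v s2 -> wend v s2 = w -> opn G (S :|: [set x]) v s2 ->
  w \notin S -> v \notin S -> 0 < k < size s2 ->
  (forall j, k < j < size s2 -> collider s2 j -> wnode v s2 j \in ancS G S) ->
  wnode v s2 k \notin ancS G S -> connect (dir G) (wnode v s2 k) v ->
  exists s, [/\ walk_ok G v s, wend v s = w & opn G S v s].
Proof.
move=> Hw He [_ [_ Ho]] hw hv /andP[Hk0 Hk] Hmax Hc Hcv.
set c := wnode v s2 k in Hc Hcv.
case/connectP: Hcv => p Hp Hl.
have [Hr1 Hr2] := walk_rev Hp; rewrite -Hl in Hr1 Hr2.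
set rr := [seq (Bwd, z) | z <- rev (belast c p)] in Hr1 Hr2.
have Hnot : forall z, connect (dir G) c z -> z \notin S.
  move=> z Hz; apply/negP => Hz'; case/negP: Hc; exact: ancS_conn Hz (ancS_self _ Hz').
have Hks : k <= size s2 by apply: ltnW.
have Htd : walk_ok G c (drop k s2).
  by move: Hw; rewrite -{1}(cat_take_drop k s2) walk_ok_cat wend_take // => /andP[].
have Hend : wend v (rr ++ drop k s2) = w.
  by rewrite wend_cat Hr2 -He -{2}(cat_take_drop k s2) wend_cat wend_take.
have Hsr : size rr = size p by rewrite size_map size_rev size_belast.
exists (rr ++ drop k s2); split => //.
- by rewrite walk_ok_cat Hr1 Hr2.
split => //; split; first by rewrite Hend.
move=> i /andP[Hi0 Hi]; rewrite size_cat size_drop in Hi.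
case: (ltngtP i (size rr)) => Hir.
- have Hn : wnode v (rr ++ drop k s2) i = wnode v rr i by apply: wnode_cat; apply: ltnW.
  have Hcol : collider (rr ++ drop k s2) i = false.
    rewrite /collider wkind_cat; last by lia.
    rewrite wkind_const //; last by rewrite size_rev size_belast -Hsr; lia.
  rewrite Hcol; split => // _.
  have Hm : wnode v rr i \in c :: p.
    rewrite /rr wnode_const.
    have : nth v (v :: rev (belast c p)) i \in v :: rev (belast c p).
      by apply: mem_nth; rewrite /= size_rev size_belast -Hsr; lia.
    rewrite inE => /orP[/eqP->|]; first by rewrite Hl mem_last.
    by rewrite mem_rev => /mem_belast.
  by rewrite Hn (negbTE (Hnot _ (path_connect Hp Hm))).
- have [j Ej] : exists j, i = size rr + j by exists (i - size rr); lia.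
  have Hj0 : 0 < j by lia.
  have Hjs : j < size s2 - k by lia.
  have Hkj2 : k < k + j < size s2 by apply/andP; split; lia.
  have Hkj : 0 < k + j < size s2 by apply/andP; split; lia.
  have Hnd : wnode v (rr ++ drop k s2) i = wnode v s2 (k + j).
    rewrite Ej wnode_cat2 ?size_drop; last by lia.
    by rewrite Hr2 wnode_drop //; lia.
  have [Hcol Hpo] : collider (rr ++ drop k s2) i = collider s2 (k + j) /\
     points_out G v (rr ++ drop k s2) i = points_out G v s2 (k + j).
    rewrite Ej; apply: ctx_eq.
    + have -> : (size rr + j).-1 = size rr + j.-1 by lia.
      have -> : (k + j).-1 = k + j.-1 by lia.
      by rewrite wkind_cat2 wkind_drop.
    + by rewrite wkind_cat2 wkind_drop.
    + have -> : (size rr + j).-1 = size rr + j.-1 by lia.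
      have -> : (k + j).-1 = k + j.-1 by lia.
      rewrite wnode_cat2 ?size_drop; last by lia.
      by rewrite Hr2 wnode_drop //; lia.
    + rewrite wnode_cat2 ?size_drop; last by lia.
      by rewrite Hr2 wnode_drop //; lia.
    + rewrite -addnS wnode_cat2 ?size_drop; last by lia.
      rewrite Hr2 wnode_drop ?addnS //; lia.
  rewrite Hcol Hpo Hnd; split.
  + exact: Hmax Hkj2.
  + move=> Hnc HS; have [_ H] := Ho (k + j) Hkj.
    by apply: H => //; rewrite in_setU HS.
- have Hn : wnode v (rr ++ drop k s2) i = c.
    by rewrite wnode_cat ?Hir // -Hr2 wend_wnode.
  have Hcol : collider (rr ++ drop k s2) i = false.
    rewrite /collider wkind_cat; last by lia.
    rewrite wkind_const //; rewrite size_rev size_belast -Hsr; lia.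
  rewrite Hcol Hn; split => // _.
  by rewrite (negbTE (Hnot _ (connect0 _ _))).
Qed.

Lemma wnode_cat2k (V : finType) (u : V) s r k j :
  size s = k -> j <= size r -> wnode u (s ++ r) (k + j) = wnode (wend u s) r j.
Proof. by move=> <-; apply: wnode_cat2. Qed.

Lemma wkind_cat2k (V : finType) (s r : seq (mark * V)) k j :
  size s = k -> wkind (s ++ r) (k + j) = wkind r j.
Proof. by move=> <-; apply: wkind_cat2. Qed.

Lemma walkA (V : finType) (G : DMG V) (S : {set V}) x y (v : V) s2 k p tl :
  walk_ok G v s2 -> opn G (S :|: [set x]) v s2 ->
  v \notin S :|: [set x] -> y \notin S :|: [set x] ->
  0 < k < size s2 -> collider s2 k -> wnode v s2 k \notin ancS G S ->
  path (dir G) (wnode v s2 k) p -> connect (dir G) (last (wnode v s2 k) p) x ->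
  (tl = [::] /\ last (wnode v s2 k) p = y) \/
  (tl = [:: (Bid, y)] /\ last (wnode v s2 k) p = x /\ bid G x y) ->
  exists s, [/\ walk_ok G v s, wend v s = y & opn G (S :|: [set x]) v s].
Proof.
move=> Hw [_ [_ Ho]] hv hy /andP[Hk0 Hk] Hck Hc Hp Hlx Htl.
set c := wnode v s2 k in Hc Hp Hlx Htl.
set C := S :|: [set x] in Ho hv hy *.
set q := [seq (Fwd, z) | z <- p].
have Hnot : forall z, connect (dir G) c z -> z \notin S.
  move=> z Hz; apply/negP => Hz'; case/negP: Hc; exact: ancS_conn Hz (ancS_self _ Hz').
have Hks : k <= size s2 by apply: ltnW.
have Htk : walk_ok G v (take k s2).
  by move: Hw; rewrite -{1}(cat_take_drop k s2) walk_ok_cat => /andP[].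
have Hwt : wend v (take k s2) = c by rewrite wend_take.
have Hsz : size (take k s2) = k by rewrite size_take_le.
have [Htl1 Htl2] : walk_ok G (last c p) tl /\ wend (last c p) tl = y.
  by case: Htl => [[-> ->]|[-> [-> Hb]]] //=; rewrite Hb.
have Hstl : size tl <= 1 by case: Htl => [[-> _]|[-> _]].
have Hsq : size q = size p by rewrite size_map.
set s' := take k s2 ++ (q ++ tl).
have Hws : walk_ok G v s'.
  by rewrite /s' !walk_ok_cat Htk Hwt walk_fwd Hp /q wend_const.
have Hes : wend v s' = y by rewrite /s' !wend_cat Hwt /q wend_const.
have Hss : size s' = k + (size p + size tl) by rewrite /s' !size_cat Hsz Hsq.
exists s'; split => //; split => //; split; first by rewrite Hes.
move=> i /andP[Hi0 Hi]; rewrite Hss in Hi.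
case: (ltnP i k) => Hik.
- have Hik' : 0 < i < size s2 by clear -Hi0 Hik Hk; apply/andP; split; lia.
  have Hm1 : i.-1 < k by clear -Hik Hi0; lia.
  have Hp1 : i.+1 <= k by clear -Hik; lia.
  have Hm1' : i.-1 <= k by clear -Hik; lia.
  have Hi' : i <= k by clear -Hik; lia.
  have [Hcol Hpo] : collider s' i = collider s2 i /\ points_out G v s' i = points_out G v s2 i.
    apply: ctx_eq.
    + by rewrite /s' wkind_cat ?Hsz // wkind_take.
    + by rewrite /s' wkind_cat ?Hsz // wkind_take.
    + by rewrite /s' wnode_cat ?Hsz // wnode_take.
    + by rewrite /s' wnode_cat ?Hsz // wnode_take.
    + by rewrite /s' wnode_cat ?Hsz // wnode_take.
  have Hn : wnode v s' i = wnode v s2 i by rewrite /s' wnode_cat ?Hsz // wnode_take.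
  by rewrite Hcol Hpo Hn; exact: Ho.
- have [j Ej] : exists j, i = k + j by exists (i - k); clear -Hik; lia.
  have Hjp : j <= size p by clear -Hi Ej Hstl; lia.
  have Hjq : j <= size (q ++ tl) by rewrite size_cat Hsq; clear -Hjp; lia.
  have Hnode : forall j', j' <= size p -> wnode v s' (k + j') = nth c (c :: p) j'.
    move=> j' Hj'; rewrite /s' (@wnode_cat2k _ v _ _ _ _ Hsz) ?Hwt; last by rewrite size_cat Hsq; clear -Hj'; lia.
    by rewrite wnode_cat ?Hsq // /q wnode_const.
  have Hmem : forall j', j' <= size p -> wnode v s' (k + j') \in c :: p.
    by move=> j' Hj'; rewrite Hnode //; apply: mem_nth; rewrite /= ltnS.
  have Hleft : head_at_end (wkind s' i.-1).
    rewrite Ej; case: j Ej Hjp Hjq => [|j] Ej Hjp Hjq.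
    - rewrite addn0 /s' wkind_cat ?Hsz; last by clear -Hk0; lia.
      rewrite wkind_take //; last by clear -Hk0; lia.
      by move: Hck; rewrite /collider => /andP[].
    - rewrite addnS /= /s' (@wkind_cat2k _ _ _ _ _ Hsz) wkind_cat ?Hsq; last by clear -Hjp; lia.
      by rewrite /q wkind_const //; clear -Hjp; lia.
  have HnS : wnode v s' i \notin S by rewrite Ej; apply: Hnot; exact: (path_connect Hp (Hmem _ Hjp)).
  case: (ltnP j (size p)) => Hjs.
  + have Hright : wkind s' i = Fwd.
      by rewrite Ej /s' (@wkind_cat2k _ _ _ _ _ Hsz) wkind_cat ?Hsq // /q wkind_const.
    have Hcol : collider s' i = false by rewrite /collider Hright andbF.
    rewrite Hcol; split => // _.
    rewrite in_setU (negbTE HnS) /= in_set1 => /eqP Hx.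
    have He : edge_ok G (wnode v s' i) (wkind s' i) (wnode v s' i.+1).
      have Hi2 : i < size s' by rewrite Hss.
      exact: (walk_okP Hws Hi2).
    rewrite Hright /= in He.
    have Hnx : wnode v s' i.+1 \in c :: p by rewrite Ej -addnS; apply: Hmem.
    have Hsc : same_scc G (wnode v s' i) (wnode v s' i.+1).
      rewrite /same_scc connect1 //=.
      by apply: connect_trans (path_last_conn Hp Hnx) _; rewrite Hx.
    rewrite /points_out Hright Hsc /= orbF.
    by case: (wkind s' i.-1) Hleft.
  + have Ejp : j = size p by clear -Hjs Hjp; lia.
    case: Htl Hi => [[Htl0 _]|[Htl0 [Hlast _]]] Hi.
    * by rewrite Htl0 /= in Hi; clear -Hi Ej Ejp; lia.
    have Hright : wkind s' i = Bid.
      by rewrite Ej Ejp /s' (@wkind_cat2k _ _ _ _ _ Hsz) -Hsq -[size q]addn0 wkind_cat2 Htl0.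
    have Hcol : collider s' i by rewrite /collider Hright Hleft.
    rewrite Hcol; split => // _.
    have -> : wnode v s' i = x by rewrite Ej Hnode // Ejp -Hlast (last_nth c).
    by apply: ancS_self; rewrite in_setU in_set1 eqxx orbT.
Qed.

Theorem proposition3 (V : finType) (G : DMG V) (CI : V -> V -> {set V} -> Prop)
  (S : {set V}) (v w x y : V) :
  sigma_markov_faithful G CI ->
  uniq [:: v; w; x; y] ->
  v \notin S -> w \notin S -> x \notin S -> y \notin S ->
  min_indep CI v y S [set x] ->
  min_dep CI v w S [set x] ->
  [/\ x \in anc G y, y \notin anc G x, x \notin ancS G S & ~~ bid G x y].
Proof.
move=> Hmf Hu hv hw hx hy [Hi1 Hi2] [Hd1 Hd2].
move: Hu; rewrite /= !inE !negb_or => /and4P[/and3P[vw vx vy] /andP[wx wy] xy _].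
set C := S :|: [set x].
have vC : v \notin C by rewrite in_setU in_set1 negb_or hv vx.
have yC : y \notin C by rewrite in_setU in_set1 negb_or hy eq_sym xy.
have wC : w \notin C by rewrite in_setU in_set1 negb_or hw wx.
have H1 : sigma_sep G v y C := (Hmf v y C vy vC yC).1 Hi1.
have Hp0 : set0 \proper [set x] by rewrite proper0; apply/set0Pn; exists x; rewrite in_set1.
have H2 : ~ sigma_sep G v y S.
  move=> Hs; apply: (Hi2 set0 Hp0); rewrite setU0; exact: (Hmf v y S vy hv hy).2.
have H3 : ~ sigma_sep G v w C.
  move=> Hs; apply: Hd1; exact: (Hmf v w C vw vC wC).2.
have H4 : sigma_sep G v w S.
  have := Hd2 set0 Hp0; rewrite setU0 => H; exact: (Hmf v w S vw hv hw).1 H.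
have [s2 [Hw2 He2 Hb2]] : exists s, [/\ walk_ok G v s, wend v s = w & ~ sigma_blocked G C v s].
  apply: NNPP => Hn; apply: H3 => s Hw He; apply: NNPP => Hb; apply: Hn; by exists s.
have Ho2 := nb_opn Hb2.
have Hbl2 := H4 s2 Hw2 He2.
have hw2 : wend v s2 \notin S by rewrite He2.
have [k [Hk Hck Hnk Hmax]] := get_c Ho2 Hbl2 hv hw2.
set c := wnode v s2 k in Hnk.
have Hcx : connect (dir G) c x.
  have [_ [_ Ho2c]] := Ho2; have [H _] := Ho2c k Hk; exact: ancS_U1 (H Hck) Hnk.
have xS : x \notin ancS G S.
  apply/negP => Hx; case/negP: Hnk; exact: ancS_conn Hcx Hx.
have xv : ~ connect (dir G) x v.
  move=> Hxv.
  have [s [Hw He Ho]] := walkB Hw2 He2 Ho2 hw hv Hk Hmax Hnk (connect_trans Hcx Hxv).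
  exact: (opn_nb Ho) (H4 s Hw He).
have [s1 [Hw1 He1 Hb1]] : exists s, [/\ walk_ok G v s, wend v s = y & ~ sigma_blocked G S v s].
  apply: NNPP => Hn; apply: H2 => s Hw He; apply: NNPP => Hb; apply: Hn; by exists s.
have [_ [_ Ho1]] := nb_opn Hb1.
have Hc1 : forall i, 0 < i < size s1 -> collider s1 i -> wnode v s1 i \in ancS G S.
  by move=> i Hi Hc; exact: (Ho1 i Hi).1 Hc.
have Hxy : connect (dir G) x y.
  case: (H1 s1 Hw1 He1) => [Hin|[Hin|[i [Hi [[Hcol Hn]|[Hcol [HC Hpo]]]]]]].
  - by rewrite Hin in vC.
  - by rewrite He1 in Hin; rewrite Hin in yC.
  - case/negP: Hn; apply: ancS_mono (Hc1 i Hi Hcol); by rewrite subsetUl.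
  - have [_ Hns] := Ho1 i Hi.
    have HiS : wnode v s1 i \notin S.
      by apply/negP => HS; move: (Hns Hcol HS); rewrite Hpo.
    move: HC; rewrite in_setU (negbTE HiS) in_set1 => /eqP Hix.
    move: Hpo; rewrite /points_out => /orP[/andP[Hl _]|/andP[Hr _]].
    + have Hk1 : wkind s1 i.-1 = Bwd by case: (wkind s1 i.-1) Hl.
      case/andP: Hi => Hi0 Hi'.
      have Hi3 : 0 < i <= size s1 by rewrite Hi0 ltnW.
      have [H|H] := chase_bwd Hw1 Hc1 Hi3 Hk1; rewrite Hix in H.
      * by case: xv.
      * by rewrite H in xS.
    + have Hk1 : wkind s1 i = Fwd by case: (wkind s1 i) Hr.
      case/andP: Hi => _ Hi'.
      have [H|H] := chase_fwd Hw1 Hc1 Hi' Hk1; rewrite Hix in H.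
      * by rewrite He1 in H.
      * by rewrite H in xS.
split.
- by rewrite ?inE.
- rewrite ?inE; apply/negP => Hyx.
  have Hcy : connect (dir G) c y := connect_trans Hcx Hxy.
  case/connectP: Hcy => p Hp Hl.
  have Hlx : connect (dir G) (last c p) x by rewrite -Hl.
  have [s [Hw He Ho]] := walkA (tl:=[::]) Hw2 Ho2 vC yC Hk Hck Hnk Hp Hlx
    (or_introl (conj erefl (esym Hl))).
  exact: (opn_nb Ho) (H1 s Hw He).
- by move: xS; rewrite /ancS inE.
- apply/negP => Hb.
  case/connectP: Hcx => p Hp Hl.
  have Hlx : connect (dir G) (last c p) x by rewrite -Hl connect0.
  have [s [Hw He Ho]] := walkA (tl:=[:: (Bid, y)]) Hw2 Ho2 vC yC Hk Hck Hnk Hp Hlx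
    (or_intror (conj erefl (conj (esym Hl) Hb))).
  exact: (opn_nb Ho) (H1 s Hw He).
Qed.
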